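(* Let $\mathcal{L}\in\mathcal{A}(n,t,\ell)$ and assume there exists $X=(x_1,\dots,x_n)\in\mathcal{L}$, $X\neq\mathbf{0}$, with $|x_i|\le\ell$ for every $1\le i\le n$. Then $N_+(X)\ge t+1$ or $N_-(X)\ge t+1$.
   Context: $\mathcal{S}(n,t,\ell)=\{\mathcal{E}\in\mathbb{Z}^n: 0\le\varepsilon_i\le\ell \text{ for all } i,\ w_H(\mathcal{E})\le t\}$, with $w_H$ the number of nonzero coordinates. A lattice here is the set of integer combinations of $n$ linearly independent vectors of $\mathbb{Z}^n$. $\mathcal{A}(n,t,\ell)$ is the set of lattices $\mathcal{L}\subseteq\mathbb{Z}^n$ such that the translates $X+\mathcal{S}(n,t,\ell)$, $X\in\mathcal{L}$, are pairwise disjoint. For $X\in\mathbb{Z}^n$, $N_+(X)$ is the number of indices $i$ with $x_i>0$ and $N_-(X)$ the number of indices $i$ with $x_i<0$. *)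

(* Defs.v *)
From mathcomp Require Import all_boot all_order all_algebra.
Set Implicit Arguments. Unset Strict Implicit. Unset Printing Implicit Defensive.
Import Order.TTheory GRing.Theory Num.Theory.
Local Open Scope ring_scope.

Definition vec (n : nat) := 'I_n -> int.

Definition wH (n : nat) (E : vec n) : nat := #|[set i : 'I_n | E i != 0]|.

Definition inS (n t : nat) (l : int) (E : vec n) : Prop :=
  (forall i, 0 <= E i <= l) /\ (wH E <= t)%N.

Definition lincomb (n : nat) (b : 'I_n -> vec n) (c : 'I_n -> int) : vec n :=
  fun j => \sum_(i < n) c i * b i j.

(* linear independence of b (over Z, equivalently over Q) *)
Definition lin_indep (n : nat) (b : 'I_n -> vec n) : Prop :=
  forall c : 'I_n -> int, (forall j, lincomb b c j = 0) -> forall i, c i = 0.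

Definition lattice_of (n : nat) (b : 'I_n -> vec n) (X : vec n) : Prop :=
  exists c : 'I_n -> int, forall j, X j = lincomb b c j.

Definition is_lattice (n : nat) (L : vec n -> Prop) : Prop :=
  exists b : 'I_n -> vec n, lin_indep b /\ (forall X, L X <-> lattice_of b X).

(* L in A(n,t,l): the translates X + S(n,t,l), X in L, are pairwise disjoint *)
Definition in_A (n t : nat) (l : int) (L : vec n -> Prop) : Prop :=
  is_lattice L /\
  forall X Y : vec n, L X -> L Y -> (exists j, X j != Y j) ->
    ~ (exists E F : vec n, inS t l E /\ inS t l F /\
         forall j, X j + E j = Y j + F j).

Definition Nplus (n : nat) (X : vec n) : nat := #|[set i : 'I_n | 0 < X i]|.
Definition Nminus (n : nat) (X : vec n) : nat := #|[set i : 'I_n | X i < 0]|.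

(* Main.v *)
Require Import Defs.
From mathcomp Require Import all_boot all_order all_algebra.
Import Order.TTheory GRing.Theory Num.Theory.
Local Open Scope ring_scope.

Theorem mainTheorem14 (n t : nat) (l : int) (L : vec n -> Prop) (X : vec n) :
  in_A t l L -> L X -> (exists i, X i != 0) -> (forall i, `|X i| <= l) ->
  (t.+1 <= Nplus X)%N \/ (t.+1 <= Nminus X)%N.
Proof.
move=> [[b [_ Hb]] Hdis] LX [i0 Hi0] Hl.
have L0 : L (fun _ => 0).
  apply/Hb; exists (fun _ => 0) => j; rewrite /lincomb big1 // => k _; by rewrite mul0r.
case: (ssrnat.leqP t.+1 (Nplus X)) => [H|Hp]; first by left.
case: (ssrnat.leqP t.+1 (Nminus X)) => [H|Hm]; first by right.
exfalso.
pose E : vec n := fun j => if 0 < X j then X j else 0.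
pose F : vec n := fun j => if X j < 0 then - X j else 0.
apply: (Hdis X (fun _ => 0) LX L0); first by exists i0.
exists F, E; split; [|split].
- split.
    move=> j; rewrite /F; case: ifP => h.
      by rewrite oppr_ge0 ltW //= -(ltr0_norm h) Hl.
    have := Hl j; have := normr_ge0 (X j); rewrite lexx /= => h1 h2.
    exact: le_trans h1 h2.
  rewrite /wH -ltnS (leq_trans _ Hm) // ltnS /Nminus.
  apply: subset_leq_card; apply/subsetP => j; rewrite !inE /F.
  by case: ifP => // _; rewrite eqxx.
- split.
    move=> j; rewrite /E; case: ifP => h.
      by rewrite ltW //= -(gtr0_norm h) Hl.
    have := Hl j; have := normr_ge0 (X j); rewrite lexx /= => h1 h2.
    exact: le_trans h1 h2.
  rewrite /wH -ltnS (leq_trans _ Hp) // ltnS /Nplus.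
  apply: subset_leq_card; apply/subsetP => j; rewrite !inE /E.
  by case: ifP => // _; rewrite eqxx.
- move=> j; rewrite /E /F add0r.
  case: (ltrgtP (X j) 0) => h.
  + by rewrite addrN.
  + by rewrite addr0.
  + by rewrite h addr0.
Qed.
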